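(* Consider the partially replicated key-value store running the client and server algorithms described in the context. Let $K'$ be a version of key $k'$ created by operation PUT$(k',K')$ and $K$ a version of key $k$ created by PUT$(k,K)$, and suppose PUT$(k',K') \rightarrow$ PUT$(k,K)$ (so $K$ dep $K'$). Let $u_{K'},u_K$ denote the corresponding update messages, with timestamps $u_{K'}.ut, u_K.ut$. Then $u_{K'}.ut < u_K.ut$ and $K'.ut < K.ut$.
   Context: System: servers $1,\dots,n$ and clients; each client $c$ can send requests to a fixed set $S_c$ of servers. Server $i$ stores a set of keys $\mathcal{K}_i$ in a multi-version store; a version is a tuple $K=\langle k,v,ut\rangle$ (key, value, timestamp $K.ut$). Servers communicate over reliable FIFO point-to-point channels; each server $i$ has a physical clock $Clock_i$ that increases over time. Client $c$ keeps scalars $PT_c,GT_c$ (initially $0$) and a vector $LST_c$ indexed by $S_c$ (initially $0$). Client PUT$(k,v)$ at server $i$: send $(k,v,\max(PT_c,GT_c))$ to $i$, receive a timestamp $t$, set $PT_c\leftarrow\max(PT_c,t)$. Client GET$(k)$ at server $i$: compute $rd=\min_{j\in S_c,j\ne i}LST_c(j)$, send $(k,PT_c,rd,S_c)$, receive $(v,t,\{lst_j\})$, set $GT_c\leftarrow\max(GT_c,t)$ and $LST_c(j)\leftarrow\max(LST_c(j),lst_j)$ for all $j\in S_c$, return $v$. Server $i$ on a PUT request $(k,v,t)$: wait until $t<Clock_i$; create version $K$ with $K.k=k$, $K.v=v$, $K.ut=Clock_i$; insert it locally; send an update message $u_K=K$ to every server storing $k$; reply $K.ut$ to the client. On a GET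 request $(k,t,rd,g)$: (possibly wait, and) return the value $K.v$ and timestamp $K.ut$ of some locally stored version $K$ of $k$ (together with some auxiliary values). On receiving an update $u$ from server $j$: insert $u$ into local storage. Happens-before: for operations (PUT or GET) $e,f$, $e\rightarrow f$ iff (1) $e,f$ are by the same client and $e$ occurs earlier, or (2) $e$ is PUT$(k,v)$ and $f$ is a GET$(k)$ returning the value written by $e$, or (3) there is $g$ with $e\rightarrow g$ and $g\rightarrow f$. Version $K$ of $k$ causally depends on version $K'$ of $k'$ ($K$ dep $K'$) iff PUT$(k',K')\rightarrow$ PUT$(k,K)$. *)

(* Defs.v *)
From Stdlib Require Import Arith List Relations Bool.
Import ListNotations.

(* Operation identifiers: (client, sequence number of the operation at
   that client).  Used as ghost information only. *)
Definition OpId := (nat * nat)%type.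

Section Model.
Variables Key Val : Type.
(* number of servers; servers are 1..n *)
Variable n : nat.
(* Kset i k : server i stores key k  (k \in K_i) *)
Variable Kset : nat -> Key -> bool.
(* Sc c : the fixed set S_c of servers client c may contact *)
Variable Sc : nat -> list nat.

(* A version <k, v, ut>, plus the (ghost) id of the PUT that created it. *)
Record Version := mkVersion { vk : Key; vv : Val; vut : nat; vop : OpId }.

Record Update := mkUpdate { u_ver : Version }.
Definition u_ut (u : Update) : nat := vut (u_ver u).

Inductive Request :=
| ReqPut (o : OpId) (k : Key) (v : Val) (t : nat)
| ReqGet (o : OpId) (k : Key) (t : nat) (rd : option nat) (g : list nat).

Inductive Reply :=
| RepPut (t : nat)
| RepGet (v : Val) (t : nat) (lst : nat -> nat).

(* ghost log of operations as executed at servers *)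
Inductive Event :=
| EPut (o : OpId) (K : Version)
| EGet (o : OpId) (K : Version).

Record State := mkState {
  clk   : nat -> nat;
  store : nat -> list Version;
  chan  : nat -> nat -> list Update;  (* FIFO channel from i to j *)
  cPT   : nat -> nat;
  cGT   : nat -> nat;
  cLST  : nat -> nat -> nat;
  cseq  : nat -> nat;                 (* number of operations issued by c *)
  creq  : nat -> option (nat * Request); (* outstanding request (server, req) *)
  crep  : nat -> option Reply;        (* reply in transit to c *)
  log   : list Event
}.

Definition init : State :=
  mkState (fun _ => 0) (fun _ => []) (fun _ _ => []) (fun _ => 0) (fun _ => 0)
          (fun _ _ => 0) (fun _ => 0) (fun _ => None) (fun _ => None) [].

Definition upd {A} (f : nat -> A) (x : nat) (a : A) : nat -> A :=
  fun y => if Nat.eqb y x then a else f y.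

Definition is_server (i : nat) : Prop := 1 <= i <= n.

(* rd = min_{j in S_c, j <> i} LST_c(j); None when that set is empty *)
Definition min_opt (l : list nat) : option nat :=
  match l with
  | [] => None
  | x :: r => Some (fold_left Nat.min r x)
  end.
Definition compute_rd (c i : nat) (LST : nat -> nat) : option nat :=
  min_opt (map LST (filter (fun j => negb (Nat.eqb j i)) (Sc c))).

Definition idle (s : State) (c : nat) : Prop := creq s c = None /\ crep s c = None.

Inductive step : State -> State -> Prop :=
| StTick s i d : is_server i ->
    step s (mkState (upd (clk s) i (clk s i + S d)) (store s) (chan s) (cPT s)
              (cGT s) (cLST s) (cseq s) (creq s) (crep s) (log s))
| StClientPut s c i k v : idle s c -> In i (Sc c) -> is_server i -> Kset i k = true ->
    step s (mkState (clk s) (store s) (chan s) (cPT s) (cGT s) (cLST s)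
              (upd (cseq s) c (S (cseq s c)))
              (upd (creq s) c (Some (i, ReqPut (c, cseq s c) k v
                                          (Nat.max (cPT s c) (cGT s c)))))
              (crep s) (log s))
| StClientGet s c i k : idle s c -> In i (Sc c) -> is_server i -> Kset i k = true ->
    step s (mkState (clk s) (store s) (chan s) (cPT s) (cGT s) (cLST s)
              (upd (cseq s) c (S (cseq s c)))
              (upd (creq s) c (Some (i, ReqGet (c, cseq s c) k (cPT s c)
                                          (compute_rd c i (cLST s c)) (Sc c))))
              (crep s) (log s))
| StServerPut s c i o k v t :
    creq s c = Some (i, ReqPut o k v t) -> t < clk s i ->
    let K := mkVersion k v (clk s i) o in
    step s (mkState (clk s) (upd (store s) i (K :: store s i))
              (upd (chan s) i (fun j => if negb (Nat.eqb j i) && Kset j k && Nat.leb 1 j && Nat.leb j n then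
                                  (chan s i j ++ [mkUpdate K]) else chan s i j))
              (cPT s) (cGT s) (cLST s) (cseq s)
              (upd (creq s) c None) (upd (crep s) c (Some (RepPut (vut K))))
              (EPut o K :: log s))
| StServerGet s c i o k t rd g K lst :
    creq s c = Some (i, ReqGet o k t rd g) -> In K (store s i) -> vk K = k ->
    step s (mkState (clk s) (store s) (chan s) (cPT s) (cGT s) (cLST s) (cseq s)
              (upd (creq s) c None) (upd (crep s) c (Some (RepGet (vv K) (vut K) lst)))
              (EGet o K :: log s))
| StRecvPut s c t : crep s c = Some (RepPut t) ->
    step s (mkState (clk s) (store s) (chan s)
              (upd (cPT s) c (Nat.max (cPT s c) t)) (cGT s) (cLST s) (cseq s)
              (creq s) (upd (crep s) c None) (log s))
| StRecvGet s c v t lst : crep s c = Some (RepGet v t lst) ->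
    step s (mkState (clk s) (store s) (chan s) (cPT s)
              (upd (cGT s) c (Nat.max (cGT s c) t))
              (upd (cLST s) c (fun j => if existsb (Nat.eqb j) (Sc c)
                                        then Nat.max (cLST s c j) (lst j)
                                        else cLST s c j))
              (cseq s) (creq s) (upd (crep s) c None) (log s))
| StDeliver s i j u rest : chan s i j = u :: rest ->
    step s (mkState (clk s) (upd (store s) j (u_ver u :: store s j))
              (upd (chan s) i (upd (chan s i) j rest))
              (cPT s) (cGT s) (cLST s) (cseq s) (creq s) (crep s) (log s)).

Definition reachable (s : State) : Prop := clos_refl_trans _ step init s.

(* operations of the execution: all issued operations *)
Definition issued (s : State) (o : OpId) : Prop := snd o < cseq s (fst o).

Inductive hb_base (s : State) : OpId -> OpId -> Prop :=
| HbClient e f : issued s e -> issued s f -> fst e = fst f -> snd e < snd f ->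
    hb_base s e f
| HbRead e f K : In (EPut e K) (log s) -> In (EGet f K) (log s) -> hb_base s e f.

Definition hb (s : State) : OpId -> OpId -> Prop := clos_trans _ (hb_base s).

End Model.

Arguments EPut {Key Val} o K.
Arguments EGet {Key Val} o K.
Arguments mkUpdate {Key Val} u_ver.
Arguments log {Key Val} s.
Arguments vut {Key Val} v.
Arguments u_ut {Key Val} u.

(* Main.v *)
Require Import Defs.
From Stdlib Require Import Arith List Relations.
From Stdlib Require Import Lia Bool.
Import ListNotations.

Definition evop {Key Val : Type} (ev : Event Key Val) : OpId :=
  match ev with EPut o _ => o | EGet o _ => o end.

Definition reqop {Key Val : Type} (r : Request Key Val) : OpId :=
  match r with ReqPut _ _ o _ _ _ => o | ReqGet _ _ o _ _ _ _ => o end.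

Definition knc {Key Val : Type} (s : State Key Val) (c : nat) : nat :=
  Nat.max (Nat.max (cPT _ _ s c) (cGT _ _ s c))
    (match crep _ _ s c with
     | Some (RepPut _ t) => t
     | Some (RepGet _ _ t _) => t
     | None => 0 end).

Definition wupd (w : OpId -> nat) (o : OpId) (x : nat) : OpId -> nat :=
  fun p => if Nat.eqb (fst p) (fst o) && Nat.eqb (snd p) (snd o) then x else w p.

Lemma wupd_eq w o x : wupd w o x o = x.
Proof. unfold wupd. rewrite !Nat.eqb_refl. reflexivity. Qed.

Lemma wupd_neq w o x p : p <> o -> wupd w o x p = w p.
Proof.
  intros H. unfold wupd. destruct p as [p1 p2], o as [o1 o2]; simpl.
  destruct (Nat.eqb_spec p1 o1), (Nat.eqb_spec p2 o2); subst; simpl; auto.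
  congruence.
Qed.

Record Inv {Key Val : Type} (s : State Key Val) (w : OpId -> nat) : Prop := {
  iU : forall e1 e2, In e1 (log s) -> In e2 (log s) -> evop e1 = evop e2 -> e1 = e2;
  iL : forall ev, In ev (log s) -> snd (evop ev) < cseq _ _ s (fst (evop ev));
  iR : forall c i r, creq _ _ s c = Some (i, r) ->
        reqop r = (c, pred (cseq _ _ s c)) /\ 0 < cseq _ _ s c /\
        (forall ev, In ev (log s) -> evop ev <> reqop r) /\ crep _ _ s c = None /\
        (forall o k v t, r = ReqPut _ _ o k v t -> t = Nat.max (cPT _ _ s c) (cGT _ _ s c));
  iW1 : forall o K, In (EPut o K) (log s) -> w o = vut K;
  iW2 : forall o K, In (EGet o K) (log s) -> vut K <= w o;
  iW3 : forall a b, fst a = fst b -> snd a < snd b -> snd b < cseq _ _ s (fst b) ->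
        w a <= w b /\ (forall K, In (EPut b K) (log s) -> w a < w b);
  iKN : forall c q, q < cseq _ _ s c -> w (c, q) <= knc s c
}.

Lemma upd_eq {A} (f : nat -> A) x a : upd f x a x = a.
Proof. unfold upd. rewrite Nat.eqb_refl. reflexivity. Qed.
Lemma upd_neq {A} (f : nat -> A) x a y : y <> x -> upd f x a y = f y.
Proof. intros H. unfold upd. destruct (Nat.eqb_spec y x); congruence. Qed.

Lemma knc_in_log {Key Val} (s : State Key Val) w ev :
  Inv s w -> In ev (log s) -> evop ev <> (fst (evop ev), cseq _ _ s (fst (evop ev))).
Proof. intros I H E. apply (iL _ _ I) in H. rewrite E in H. simpl in H. lia. Qed.

Lemma step_inv {Key Val} n Kset Sc (s s' : State Key Val) w :
  step Key Val n Kset Sc s s' -> Inv s w -> exists w', Inv s' w'.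
Proof.
  intros Hs I. destruct I as [IU IL IR IW1 IW2 IW3 IKN].
  destruct Hs.
  -
    exists w; split; simpl; auto.
  -
    destruct H as [Hq Hp].
    exists (wupd w (c, cseq _ _ s c) (Nat.max (cPT _ _ s c) (cGT _ _ s c))).
    split; simpl.
    + exact IU.
    + intros ev Hev. specialize (IL ev Hev).
      destruct (Nat.eq_dec (fst (evop ev)) c) as [E|Hne].
      * rewrite E in *. rewrite upd_eq; lia.
      * rewrite upd_neq; auto.
    + intros c' i' r Hr. destruct (Nat.eq_dec c' c) as [->|Hne].
      * rewrite upd_eq in Hr. inversion Hr; subst; clear Hr. simpl.
        rewrite upd_eq. repeat split; auto; try lia.
        -- intros ev Hev E. specialize (IL ev Hev). rewrite E in IL. simpl in IL. lia.
        -- intros o k' v' t' E. inversion E; auto.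
      * rewrite upd_neq in Hr by auto. rewrite upd_neq by auto. apply IR in Hr.
        exact Hr.
    + intros o K Hin. rewrite wupd_neq. apply IW1; auto.
      intros E. apply IL in Hin. simpl in Hin. rewrite E in Hin. simpl in Hin. lia.
    + intros o K Hin. rewrite wupd_neq. apply IW2; auto.
      intros E. apply IL in Hin. simpl in Hin. rewrite E in Hin. simpl in Hin. lia.
    + intros [a1 a2] [b1 b2] E1 E2 E3. simpl in *. subst a1.
      destruct (Nat.eq_dec b1 c) as [->|Hne].
      * rewrite upd_eq in E3.
        rewrite (wupd_neq _ _ _ (c, a2)) by (intro X; inversion X; lia).
        destruct (Nat.eq_dec b2 (cseq _ _ s c)) as [->|Hb].
        -- rewrite wupd_eq. split.
           ++ specialize (IKN c a2 E2). unfold knc in IKN. rewrite Hp in IKN. lia.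
           ++ intros K Hin. apply IL in Hin. simpl in Hin. lia.
        -- rewrite wupd_neq by (intro X; inversion X; lia).
           apply IW3; simpl; auto; lia.
      * rewrite upd_neq in E3 by auto.
        rewrite !wupd_neq by (intro X; inversion X; lia).
        apply IW3; simpl; auto.
    + intros c' q Hq'. unfold knc; simpl.
      destruct (Nat.eq_dec c' c) as [->|Hne].
      * rewrite upd_eq in Hq'.
        destruct (Nat.eq_dec q (cseq _ _ s c)) as [->|Hb].
        -- rewrite wupd_eq. lia.
        -- rewrite wupd_neq by (intro X; inversion X; lia).
           apply (IKN c q). lia.
      * rewrite upd_neq in Hq' by auto.
        rewrite wupd_neq by (intro X; inversion X; lia).
        apply (IKN c' q). auto.
  -
    destruct H as [Hq Hp].
    exists (wupd w (c, cseq _ _ s c) (Nat.max (cPT _ _ s c) (cGT _ _ s c))).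
    split; simpl.
    + exact IU.
    + intros ev Hev. specialize (IL ev Hev).
      destruct (Nat.eq_dec (fst (evop ev)) c) as [E|Hne].
      * rewrite E in *. rewrite upd_eq; lia.
      * rewrite upd_neq; auto.
    + intros c' i' r Hr. destruct (Nat.eq_dec c' c) as [->|Hne].
      * rewrite upd_eq in Hr. inversion Hr; subst; clear Hr. simpl.
        rewrite upd_eq. repeat split; auto; try lia.
        -- intros ev Hev E. specialize (IL ev Hev). rewrite E in IL. simpl in IL. lia.
        -- intros o k' v' t' E. discriminate E.
      * rewrite upd_neq in Hr by auto. rewrite upd_neq by auto. apply IR in Hr.
        exact Hr.
    + intros o K Hin. rewrite wupd_neq. apply IW1; auto.
      intros E. apply IL in Hin. simpl in Hin. rewrite E in Hin. simpl in Hin. lia.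
    + intros o K Hin. rewrite wupd_neq. apply IW2; auto.
      intros E. apply IL in Hin. simpl in Hin. rewrite E in Hin. simpl in Hin. lia.
    + intros [a1 a2] [b1 b2] E1 E2 E3. simpl in *. subst a1.
      destruct (Nat.eq_dec b1 c) as [->|Hne].
      * rewrite upd_eq in E3.
        rewrite (wupd_neq _ _ _ (c, a2)) by (intro X; inversion X; lia).
        destruct (Nat.eq_dec b2 (cseq _ _ s c)) as [->|Hb].
        -- rewrite wupd_eq. split.
           ++ specialize (IKN c a2 E2). unfold knc in IKN. rewrite Hp in IKN. lia.
           ++ intros K Hin. apply IL in Hin. simpl in Hin. lia.
        -- rewrite wupd_neq by (intro X; inversion X; lia).
           apply IW3; simpl; auto; lia.
      * rewrite upd_neq in E3 by auto.
        rewrite !wupd_neq by (intro X; inversion X; lia).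
        apply IW3; simpl; auto.
    + intros c' q Hq'. unfold knc; simpl.
      destruct (Nat.eq_dec c' c) as [->|Hne].
      * rewrite upd_eq in Hq'.
        destruct (Nat.eq_dec q (cseq _ _ s c)) as [->|Hb].
        -- rewrite wupd_eq. lia.
        -- rewrite wupd_neq by (intro X; inversion X; lia).
           apply (IKN c q). lia.
      * rewrite upd_neq in Hq' by auto.
        rewrite wupd_neq by (intro X; inversion X; lia).
        apply (IKN c' q). auto.
  -
    destruct (IR _ _ _ H) as [Ho [Hpos [Hfresh [Hcrep Ht]]]].
    simpl in Ho. specialize (Ht _ _ _ _ eq_refl).
    exists (wupd w o (clk _ _ s i)).
    assert (Hoc : o = (c, pred (cseq _ _ s c))) by exact Ho.
    split; simpl.
    + intros e1 e2 [<-|Ha1] [<-|Ha2] E; auto.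
      * exfalso. apply (Hfresh e2 Ha2). simpl in *. congruence.
      * exfalso. apply (Hfresh e1 Ha1). simpl in *. congruence.
    + intros ev [<-|Hev]; auto. simpl. rewrite Hoc. simpl. lia.
    + intros c' i' r Hr. destruct (Nat.eq_dec c' c) as [->|Hne].
      * rewrite upd_eq in Hr. discriminate.
      * rewrite upd_neq in Hr by auto. rewrite (upd_neq _ _ _ c') by auto.
        destruct (IR _ _ _ Hr) as [A1 [A2 [A3 [A4 A5]]]].
        repeat split; auto.
        intros ev [<-|Hev]; auto. simpl. rewrite A1, Hoc. intro X; inversion X; auto.
    + intros o' K' [E|Hin].
      * inversion E; subst. rewrite wupd_eq. reflexivity.
      * rewrite wupd_neq. apply IW1; auto. intro X; subst. apply (Hfresh _ Hin). reflexivity.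
    + intros o' K' [E|Hin].
      * discriminate.
      * rewrite wupd_neq. apply IW2; auto. intro X; subst. apply (Hfresh _ Hin). reflexivity.
    + intros [a1 a2] [b1 b2] E1 E2 E3. simpl in *. subst a1.
      destruct (Nat.eq_dec b1 c) as [->|Hne].
      * destruct (Nat.eq_dec b2 (pred (cseq _ _ s c))) as [->|Hb].
        -- rewrite <- Hoc. rewrite wupd_eq.
           rewrite wupd_neq by (rewrite Hoc; intro X; inversion X; lia).
           specialize (IKN c a2 ltac:(lia)). unfold knc in IKN. rewrite Hcrep in IKN.
           split; [lia|]. intros; lia.
        -- rewrite !wupd_neq by (rewrite Hoc; intro X; inversion X; lia).
           destruct (IW3 (c, a2) (c, b2)) as [B1 B2]; simpl; auto.
           split; auto. intros K' [X|Hin]; [injection X as X1 _; rewrite Hoc in X1; inversion X1; lia|exact (B2 _ Hin)].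
      * rewrite !wupd_neq by (rewrite Hoc; intro X; inversion X; lia).
        destruct (IW3 (b1, a2) (b1, b2)) as [B1 B2]; simpl; auto.
        split; auto. intros K' [X|Hin]; [injection X as X1 _; rewrite Hoc in X1; inversion X1; lia|exact (B2 _ Hin)].
    + intros c' q Hq'. unfold knc; simpl.
      destruct (Nat.eq_dec c' c) as [->|Hne].
      * rewrite upd_eq.
        destruct (Nat.eq_dec q (pred (cseq _ _ s c))) as [->|Hb].
        -- rewrite <- Hoc, wupd_eq. simpl. lia.
        -- rewrite wupd_neq by (rewrite Hoc; intro X; inversion X; lia).
           specialize (IKN c q Hq'). unfold knc in IKN. rewrite Hcrep in IKN. lia.
      * rewrite upd_neq by auto.
        rewrite wupd_neq by (rewrite Hoc; intro X; inversion X; lia).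
        apply (IKN c' q). auto.
  -
    destruct (IR _ _ _ H) as [Ho [Hpos [Hfresh [Hcrep _]]]].
    simpl in Ho.
    exists (wupd w o (Nat.max (Nat.max (cPT _ _ s c) (cGT _ _ s c)) (vut K))).
    assert (Hoc : o = (c, pred (cseq _ _ s c))) by exact Ho.
    split; simpl.
    + intros e1 e2 [<-|Ha1] [<-|Ha2] E; auto.
      * exfalso. apply (Hfresh e2 Ha2). simpl in *. congruence.
      * exfalso. apply (Hfresh e1 Ha1). simpl in *. congruence.
    + intros ev [<-|Hev]; auto. simpl. rewrite Hoc. simpl. lia.
    + intros c' i' r Hr. destruct (Nat.eq_dec c' c) as [->|Hne].
      * rewrite upd_eq in Hr. discriminate.
      * rewrite upd_neq in Hr by auto. rewrite (upd_neq _ _ _ c') by auto.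
        destruct (IR _ _ _ Hr) as [A1 [A2 [A3 [A4 A5]]]].
        repeat split; auto.
        intros ev [<-|Hev]; auto. simpl. rewrite A1, Hoc. intro X; inversion X; auto.
    + intros o' K' [E|Hin].
      * discriminate.
      * rewrite wupd_neq. apply IW1; auto. intro X; subst. apply (Hfresh _ Hin). reflexivity.
    + intros o' K' [E|Hin].
      * inversion E; subst. rewrite wupd_eq. lia.
      * rewrite wupd_neq. apply IW2; auto. intro X; subst. apply (Hfresh _ Hin). reflexivity.
    + intros [a1 a2] [b1 b2] E1 E2 E3. simpl in *. subst a1.
      destruct (Nat.eq_dec b1 c) as [->|Hne].
      * destruct (Nat.eq_dec b2 (pred (cseq _ _ s c))) as [->|Hb].
        -- rewrite <- Hoc. rewrite wupd_eq.
           rewrite wupd_neq by (rewrite Hoc; intro X; inversion X; lia).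
           specialize (IKN c a2 ltac:(lia)). unfold knc in IKN. rewrite Hcrep in IKN.
           split; [lia|]. intros K' [X|Hin]; [discriminate|].
           exfalso. apply (Hfresh _ Hin). simpl. auto.
        -- rewrite !wupd_neq by (rewrite Hoc; intro X; inversion X; lia).
           destruct (IW3 (c, a2) (c, b2)) as [B1 B2]; simpl; auto.
           split; auto. intros K' [X|Hin]; [discriminate|exact (B2 _ Hin)].
      * rewrite !wupd_neq by (rewrite Hoc; intro X; inversion X; lia).
        destruct (IW3 (b1, a2) (b1, b2)) as [B1 B2]; simpl; auto.
        split; auto. intros K' [X|Hin]; [discriminate|exact (B2 _ Hin)].
    + intros c' q Hq'. unfold knc; simpl.
      destruct (Nat.eq_dec c' c) as [->|Hne].
      * rewrite upd_eq.
        destruct (Nat.eq_dec q (pred (cseq _ _ s c))) as [->|Hb].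
        -- rewrite <- Hoc, wupd_eq. simpl. lia.
        -- rewrite wupd_neq by (rewrite Hoc; intro X; inversion X; lia).
           specialize (IKN c q Hq'). unfold knc in IKN. rewrite Hcrep in IKN. lia.
      * rewrite upd_neq by auto.
        rewrite wupd_neq by (rewrite Hoc; intro X; inversion X; lia).
        apply (IKN c' q). auto.
  -
    exists w. split; simpl; auto.
    + intros c' i' r Hr. destruct (Nat.eq_dec c' c) as [->|Hne].
      * destruct (IR _ _ _ Hr) as [_ [_ [_ [X _]]]]. congruence.
      * rewrite !upd_neq by auto. apply (IR _ _ _ Hr).
    + intros c' q Hq'. specialize (IKN c' q Hq'). unfold knc in *; simpl.
      destruct (Nat.eq_dec c' c) as [->|Hne].
      * rewrite !upd_eq. rewrite H in IKN. lia.
      * rewrite !upd_neq by auto. auto.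
  -
    exists w. split; simpl; auto.
    + intros c' i' r Hr. destruct (Nat.eq_dec c' c) as [->|Hne].
      * destruct (IR _ _ _ Hr) as [_ [_ [_ [X _]]]]. congruence.
      * rewrite !upd_neq by auto. apply (IR _ _ _ Hr).
    + intros c' q Hq'. specialize (IKN c' q Hq'). unfold knc in *; simpl.
      destruct (Nat.eq_dec c' c) as [->|Hne].
      * rewrite !upd_eq. rewrite H in IKN. lia.
      * rewrite !upd_neq by auto. auto.
  -
    exists w; split; simpl; auto.
Qed.

Lemma reach_inv {Key Val} n Kset Sc (s : State Key Val) :
  reachable Key Val n Kset Sc s -> exists w, Inv s w.
Proof.
  intros H. unfold reachable in H.
  assert (G : forall x y, clos_refl_trans _ (step Key Val n Kset Sc) x y ->
            (exists w, Inv x w) -> exists w, Inv y w).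
  { intros x y Hxy. induction Hxy; auto.
    intros [w I]. eapply step_inv; eauto. }
  apply (G _ _ H). exists (fun _ => 0).
  split; simpl; try (intros; contradiction); try (intros; lia).
  - intros c i r Hr. discriminate.
  - intros a b _ _ Hb. exfalso. inversion Hb.
Qed.

Lemma base_mono {Key Val} (s : State Key Val) w a b :
  Inv s w -> hb_base Key Val s a b ->
  w a <= w b /\ (forall K, In (EPut b K) (log s) -> w a < w b).
Proof.
  intros I Hb. destruct Hb as [a b Ia Ib E1 E2 | a b K Ha Hb].
  - apply (iW3 _ _ I); auto.
  - rewrite (iW1 _ _ I _ _ Ha). pose proof (iW2 _ _ I _ _ Hb). split; auto.
    intros K2 H2. pose proof (iU _ _ I _ _ H2 Hb eq_refl). discriminate.
Qed.

Lemma hb_mono {Key Val} (s : State Key Val) w a b :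
  Inv s w -> hb Key Val s a b -> w a <= w b.
Proof.
  intros I H. induction H.
  - apply (base_mono s w x y I H).
  - lia.
Qed.

Theorem lemma5p1 (Key Val : Type) (n : nat) (Kset : nat -> Key -> bool)
  (Sc : nat -> list nat) (s : State Key Val)
  (Hreach : reachable Key Val n Kset Sc s)
  (e f : OpId) (K' K : Version Key Val) :
  In (EPut e K') (log s) -> In (EPut f K) (log s) ->
  hb Key Val s e f ->
  u_ut (mkUpdate K') < u_ut (mkUpdate K) /\ vut K' < vut K.
Proof.
  intros He Hf Hhb.
  destruct (reach_inv n Kset Sc s Hreach) as [w I].
  assert (Hlt : w e < w f).
  { apply clos_trans_tn1 in Hhb. destruct Hhb as [f Hb | y f Hb Hy].
    - exact (proj2 (base_mono s w _ _ I Hb) _ Hf).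
    - apply clos_tn1_trans in Hy. pose proof (hb_mono s w _ _ I Hy).
      pose proof (proj2 (base_mono s w _ _ I Hb) _ Hf). lia. }
  rewrite (iW1 _ _ I _ _ He), (iW1 _ _ I _ _ Hf) in Hlt.
  unfold u_ut; simpl. lia.
Qed.
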